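(* Let $\alpha,\beta$ be real constants with $\kappa^2=4(\alpha+\beta^2)$, $\kappa>0$. Suppose $u(x,t),v(x,t)$ solve the (rescaled) system $$\begin{cases} m_t=(\partial_x m+m\partial_x)(\kappa v_x+2\beta v-u)+n\,(\kappa u_x-2\beta u-4\alpha v)_x,\\ n_t=\big[n(\kappa v_x+2\beta v-u)\big]_x,\\ m=u_{xx}-u,\qquad n=v-v_{xx}.\end{cases}$$ Define $$p=-(\kappa n_x+2\beta n+m),\qquad \rho=\kappa n,\qquad q=-\kappa v_x-2\beta v+u.$$ Then $(p,\rho,q)$ solves the two-component Camassa–Holm equation $$\begin{cases} p_t+qp_x+2pq_x-\rho\rho_x=0,\\ \rho_t+(\rho q)_x=0,\\ p=q-q_{xx}.\end{cases}$$ That is, this is a Miura-type transformation from the first system to the two-component Camassa–Holm equation.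
   Context: $(\partial_x m+m\partial_x)w$ denotes $2mw_x+m_xw$. *)

(* Defs.v *)
From Stdlib Require Import Reals List.
From Coquelicot Require Import Coquelicot.
Open Scope R_scope.

Definition pDx (f : R -> R -> R) : R -> R -> R :=
  fun x t => Derive (fun y => f y t) x.
Definition pDt (f : R -> R -> R) : R -> R -> R :=
  fun x t => Derive (fun s => f x s) t.

Fixpoint iterD (w : list bool) (f : R -> R -> R) : R -> R -> R :=
  match w with
  | nil => f
  | b :: w' => (if b then pDx else pDt) (iterD w' f)
  end.

Definition smooth2 (f : R -> R -> R) : Prop :=
  forall w : list bool,
    (forall x t, ex_derive (fun y => iterD w f y t) x) /\
    (forall x t, ex_derive (fun s => iterD w f x s) t) /\
    (forall x t, continuity_2d_pt (iterD w f) x t).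

(* Main.v *)
Require Import Defs.
From Stdlib Require Import Reals List Lra.
From Coquelicot Require Import Coquelicot.
Open Scope R_scope.

Lemma exd_plus (f g : R -> R) x : ex_derive f x -> ex_derive g x -> ex_derive (fun y => f y + g y) x.
Proof. intros; apply (ex_derive_plus (K:=R_AbsRing) (V:=R_NormedModule)); auto. Qed.
Lemma exd_minus (f g : R -> R) x : ex_derive f x -> ex_derive g x -> ex_derive (fun y => f y - g y) x.
Proof. intros; apply (ex_derive_minus (K:=R_AbsRing) (V:=R_NormedModule)); auto. Qed.
Lemma exd_ext (f g : R -> R) x : (forall y, f y = g y) -> ex_derive f x -> ex_derive g x.
Proof. intros; apply (ex_derive_ext (K:=R_AbsRing) (V:=R_NormedModule) f); auto. Qed.
Lemma D_plus (f g : R -> R) x : ex_derive f x -> ex_derive g x -> Derive (fun y => f y + g y) x = Derive f x + Derive g x.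
Proof. intros; apply (Derive_plus f g); auto. Qed.
Lemma D_minus (f g : R -> R) x : ex_derive f x -> ex_derive g x -> Derive (fun y => f y - g y) x = Derive f x - Derive g x.
Proof. intros; apply (Derive_minus f g); auto. Qed.

Lemma iterD_ext w : forall f g, (forall x t, f x t = g x t) -> forall x t, iterD w f x t = iterD w g x t.
Proof.
  induction w as [|b w IH]; simpl; intros f g H x t; auto.
  destruct b; unfold pDx, pDt; apply Derive_ext; intros; apply IH; auto.
Qed.

Lemma smooth_ext f g : (forall x t, f x t = g x t) -> smooth2 f -> smooth2 g.
Proof.
  intros H S w; destruct (S w) as [A [B C]]; repeat split; intros.
  - eapply exd_ext; [|apply A]; intros; simpl; apply iterD_ext; auto.
  - eapply exd_ext; [|apply B]; intros; simpl; apply iterD_ext; auto.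
  - eapply continuity_2d_pt_ext; [|apply C]; intros; apply iterD_ext; auto.
Qed.

Lemma iterD_plus f g : smooth2 f -> smooth2 g -> forall w x t,
  iterD w (fun x t => f x t + g x t) x t = iterD w f x t + iterD w g x t.
Proof.
  intros Sf Sg w; induction w as [|b w IH]; simpl; intros x t; auto.
  destruct (Sf w) as [A1 [B1 C1]]; destruct (Sg w) as [A2 [B2 C2]].
  destruct b; unfold pDx, pDt.
  - rewrite (Derive_ext _ (fun y => iterD w f y t + iterD w g y t)) by (intros; apply IH).
    apply D_plus; auto.
  - rewrite (Derive_ext _ (fun y => iterD w f x y + iterD w g x y)) by (intros; apply IH).
    apply D_plus; auto.
Qed.

Lemma smooth_plus f g : smooth2 f -> smooth2 g -> smooth2 (fun x t => f x t + g x t).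
Proof.
  intros Sf Sg w; destruct (Sf w) as [A1 [B1 C1]]; destruct (Sg w) as [A2 [B2 C2]].
  repeat split; intros.
  - eapply exd_ext; [intros; symmetry; apply iterD_plus; auto|]. apply exd_plus; auto.
  - eapply exd_ext; [intros; symmetry; apply iterD_plus; auto|]. apply exd_plus; auto.
  - eapply continuity_2d_pt_ext; [intros; symmetry; apply iterD_plus; auto|].
    apply continuity_2d_pt_plus; auto.
Qed.

Lemma iterD_scal a f : forall w x t,
  iterD w (fun x t => a * f x t) x t = a * iterD w f x t.
Proof.
  intros w; induction w as [|b w IH]; simpl; intros x t; auto.
  destruct b; unfold pDx, pDt.
  - rewrite (Derive_ext _ (fun y => a * iterD w f y t)) by (intros; apply IH).
    apply Derive_scal.
  - rewrite (Derive_ext _ (fun y => a * iterD w f x y)) by (intros; apply IH).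
    apply Derive_scal.
Qed.

Lemma smooth_scal a f : smooth2 f -> smooth2 (fun x t => a * f x t).
Proof.
  intros Sf w; destruct (Sf w) as [A1 [B1 C1]].
  repeat split; intros.
  - eapply exd_ext; [intros; symmetry; apply iterD_scal|]. apply ex_derive_scal; auto.
  - eapply exd_ext; [intros; symmetry; apply iterD_scal|]. apply ex_derive_scal; auto.
  - eapply continuity_2d_pt_ext; [intros; symmetry; apply iterD_scal|].
    apply continuity_2d_pt_mult; auto. apply continuity_2d_pt_const.
Qed.

Lemma smooth_minus f g : smooth2 f -> smooth2 g -> smooth2 (fun x t => f x t - g x t).
Proof.
  intros Sf Sg. eapply smooth_ext; [|apply (smooth_plus _ _ Sf (smooth_scal (-1) _ Sg))].
  intros; simpl; ring.
Qed.

Lemma iterD_Dx f w : iterD w (pDx f) = iterD (w ++ true :: nil) f.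
Proof. induction w as [|b w IH]; simpl; auto; rewrite IH; auto. Qed.
Lemma iterD_Dt f w : iterD w (pDt f) = iterD (w ++ false :: nil) f.
Proof. induction w as [|b w IH]; simpl; auto; rewrite IH; auto. Qed.

Lemma smooth_Dx f : smooth2 f -> smooth2 (pDx f).
Proof. intros S w; rewrite iterD_Dx; apply S. Qed.
Lemma smooth_Dt f : smooth2 f -> smooth2 (pDt f).
Proof. intros S w; rewrite iterD_Dt; apply S. Qed.

Lemma sm_x f : smooth2 f -> forall x t, ex_derive (fun y => f y t) x.
Proof. intros S; apply (S nil). Qed.
Lemma sm_t f : smooth2 f -> forall x t, ex_derive (fun s => f x s) t.
Proof. intros S; apply (S nil). Qed.

Lemma schwarz f : smooth2 f -> forall x t, pDt (pDx f) x t = pDx (pDt f) x t.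
Proof.
  intros S x t. unfold pDx, pDt. symmetry.
  destruct (S nil) as [A0 [B0 _]].
  destruct (S (false::nil)) as [A1 _].
  destruct (S (true::nil)) as [_ [B2 _]].
  destruct (S (true::false::nil)) as [_ [_ C3]].
  destruct (S (false::true::nil)) as [_ [_ C4]].
  simpl in *. unfold pDx, pDt in *.
  apply Schwarz.
  - exists (mkposreal 1 Rlt_0_1). intros u v _ _.
    split; [apply A0|split; [apply B0|split; [apply A1|apply B2]]].
  - apply C3.
  - apply C4.
Qed.

Lemma Dx_plus (f g : R -> R -> R) (x t : R) : (forall a b, ex_derive (fun y => f y b) a) -> (forall a b, ex_derive (fun y => g y b) a) ->
  pDx (fun y s => f y s + g y s) x t = pDx f x t + pDx g x t.
Proof. intros; unfold pDx; apply D_plus; auto. Qed.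
Lemma Dx_minus (f g : R -> R -> R) (x t : R) : (forall a b, ex_derive (fun y => f y b) a) -> (forall a b, ex_derive (fun y => g y b) a) ->
  pDx (fun y s => f y s - g y s) x t = pDx f x t - pDx g x t.
Proof. intros; unfold pDx; apply D_minus; auto. Qed.
Lemma Dx_mult (f g : R -> R -> R) (x t : R) : (forall a b, ex_derive (fun y => f y b) a) -> (forall a b, ex_derive (fun y => g y b) a) ->
  pDx (fun y s => f y s * g y s) x t = pDx f x t * g x t + f x t * pDx g x t.
Proof. intros; unfold pDx; apply (Derive_mult (fun y => f y t) (fun y => g y t)); auto. Qed.
Lemma Dx_scal c (f : R -> R -> R) (x t : R) : pDx (fun y s => c * f y s) x t = c * pDx f x t.
Proof. unfold pDx; apply Derive_scal. Qed.
Lemma Dx_opp (f : R -> R -> R) (x t : R) : pDx (fun y s => - f y s) x t = - pDx f x t.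
Proof. unfold pDx; apply Derive_opp. Qed.
Lemma Dt_plus (f g : R -> R -> R) (x t : R) : (forall a b, ex_derive (fun s => f a s) b) -> (forall a b, ex_derive (fun s => g a s) b) ->
  pDt (fun y s => f y s + g y s) x t = pDt f x t + pDt g x t.
Proof. intros; unfold pDt; apply D_plus; auto. Qed.
Lemma Dt_scal c (f : R -> R -> R) (x t : R) : pDt (fun y s => c * f y s) x t = c * pDt f x t.
Proof. unfold pDt; apply Derive_scal. Qed.
Lemma Dt_opp (f : R -> R -> R) (x t : R) : pDt (fun y s => - f y s) x t = - pDt f x t.
Proof. unfold pDt; apply Derive_opp. Qed.
Lemma Dx_ext (f g : R -> R -> R) (x t : R) : (forall a b, f a b = g a b) -> pDx f x t = pDx g x t.
Proof. intros; unfold pDx; apply Derive_ext; auto. Qed.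
Lemma Dt_ext (f g : R -> R -> R) (x t : R) : (forall a b, f a b = g a b) -> pDt f x t = pDt g x t.
Proof. intros; unfold pDt; apply Derive_ext; auto. Qed.
Lemma exd_opp (f : R -> R) x : ex_derive f x -> ex_derive (fun y => - f y) x.
Proof. intros; apply (exd_ext (fun y => (-1) * f y)); [intros; ring|]. apply ex_derive_scal; auto. Qed.


Ltac sm := lazymatch goal with
  | |- smooth2 (pDx ?f) => apply smooth_Dx; sm
  | |- smooth2 (pDt ?f) => apply smooth_Dt; sm
  | |- smooth2 _ => assumption
  end.
Lemma exd_const (c : R) x : ex_derive (fun _ : R => c) x.
Proof. apply (ex_derive_const (K:=R_AbsRing) (V:=R_NormedModule)). Qed.

Ltac isconst F := let a := eval cbv beta in (F 0) in let b := eval cbv beta in (F 1) in constr_eq a b.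

Ltac exdg leaf := intros; cbv beta; match goal with |- ex_derive ?F _ =>
  first [ isconst F; apply exd_const | exd2 leaf ] end
with exd2 leaf := lazymatch goal with
  | |- ex_derive (fun y => _ + _) _ => apply exd_plus; exdg leaf
  | |- ex_derive (fun y => _ - _) _ => apply exd_minus; exdg leaf
  | |- ex_derive (fun y => - _) _ => apply exd_opp; exdg leaf
  | |- ex_derive (fun y => _ * _) _ => apply ex_derive_mult; exdg leaf
  | |- ex_derive (fun y => pDx ?f _ _) _ => leaf (pDx f)
  | |- ex_derive (fun y => pDt ?f _ _) _ => leaf (pDt f)
  | |- ex_derive (fun y => ?f _ _) _ => leaf f
  | |- ex_derive (?f _) _ => leaf f
  end.
Ltac leafx f := apply (sm_x f); sm.
Ltac leaft f := apply (sm_t f); sm.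
Ltac exd := exdg leafx.
Ltac exdt := exdg leaft.

Theorem proposition2 (alpha beta kappa : R) (u v : R -> R -> R) :
  0 < kappa ->
  kappa ^ 2 = 4 * (alpha + beta ^ 2) ->
  smooth2 u -> smooth2 v ->
  let m := fun (x t : R) => pDx (pDx u) x t - u x t in
  let n := fun (x t : R) => v x t - pDx (pDx v) x t in
  let w := fun (x t : R) => kappa * pDx v x t + 2 * beta * v x t - u x t in
  let z := fun (x t : R) => kappa * pDx u x t - 2 * beta * u x t - 4 * alpha * v x t in
  (forall x t, pDt m x t =
      2 * m x t * pDx w x t + pDx m x t * w x t + n x t * pDx z x t) ->
  (forall x t, pDt n x t = pDx (fun (y s : R) => n y s * w y s) x t) ->
  let p := fun (x t : R) => - (kappa * pDx n x t + 2 * beta * n x t + m x t) in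
  let rho := fun (x t : R) => kappa * n x t in
  let q := fun (x t : R) => - kappa * pDx v x t - 2 * beta * v x t + u x t in
  forall x t,
    pDt p x t + q x t * pDx p x t + 2 * p x t * pDx q x t - rho x t * pDx rho x t = 0 /\
    pDt rho x t + pDx (fun (y s : R) => rho y s * q y s) x t = 0 /\
    p x t = q x t - pDx (pDx q) x t.
Proof.
  intros Hk0 Hk Su Sv m n w z Hm Hn p rho q.
  assert (Sm : smooth2 m) by exact (smooth_minus _ _ (smooth_Dx _ (smooth_Dx _ Su)) Su).
  assert (Sn : smooth2 n) by exact (smooth_minus _ _ Sv (smooth_Dx _ (smooth_Dx _ Sv))).
  assert (Sw : smooth2 w) by exact (smooth_minus _ _ (smooth_plus _ _ (smooth_scal kappa _ (smooth_Dx _ Sv)) (smooth_scal (2*beta) _ Sv)) Su).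
  assert (Sz : smooth2 z) by exact (smooth_minus _ _ (smooth_minus _ _ (smooth_scal kappa _ (smooth_Dx _ Su)) (smooth_scal (2*beta) _ Su)) (smooth_scal (4*alpha) _ Sv)).
  assert (Eq : forall x t, q x t = - w x t) by (intros; unfold q, w; ring).
  assert (Enx : forall x t, pDx n x t = pDx v x t - pDx (pDx (pDx v)) x t).
  { intros; unfold n; rewrite Dx_minus; [reflexivity|exd|exd]. }
  assert (Ewx : forall x t, pDx w x t = kappa * pDx (pDx v) x t + 2*beta*pDx v x t - pDx u x t).
  { intros; unfold w; rewrite Dx_minus, Dx_plus, !Dx_scal; [reflexivity|exd..]. }
  assert (Ewxx : forall x t, pDx (pDx w) x t = kappa * pDx (pDx (pDx v)) x t + 2*beta*pDx (pDx v) x t - pDx (pDx u) x t).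
  { intros; rewrite (Dx_ext _ _ _ _ Ewx). rewrite Dx_minus, Dx_plus, !Dx_scal; [reflexivity|exd..]. }
  assert (Ezx : forall x t, pDx z x t = kappa * pDx (pDx u) x t - 2*beta*pDx u x t - 4*alpha*pDx v x t).
  { intros; unfold z; rewrite !Dx_minus, !Dx_scal; [reflexivity|exd..]. }
  assert (Eqx : forall x t, pDx q x t = - pDx w x t).
  { intros; rewrite (Dx_ext _ _ _ _ Eq), Dx_opp; reflexivity. }
  assert (Eqxx : forall x t, pDx (pDx q) x t = - pDx (pDx w) x t).
  { intros; rewrite (Dx_ext _ _ _ _ Eqx), Dx_opp; reflexivity. }
  assert (Enw : forall x t, pDx (fun y s => n y s * w y s) x t = pDx n x t * w x t + n x t * pDx w x t).
  { intros; rewrite Dx_mult; [reflexivity|exd..]. }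
  assert (Enwxx : forall x t, pDx (pDx (fun y s => n y s * w y s)) x t =
     pDx (pDx n) x t * w x t + 2 * pDx n x t * pDx w x t + n x t * pDx (pDx w) x t).
  { intros; rewrite (Dx_ext _ _ _ _ Enw), Dx_plus, (Dx_mult (pDx n) w), (Dx_mult n (pDx w)); [ring|exd..]. }
  assert (Entx : forall x t, pDt (pDx n) x t = pDx (pDx (fun y s => n y s * w y s)) x t).
  { intros; rewrite schwarz by exact Sn. apply Dx_ext; intros; apply Hn. }
  assert (Epx : forall x t, pDx p x t = - (kappa * pDx (pDx n) x t + 2*beta*pDx n x t + pDx m x t)).
  { intros; unfold p; rewrite Dx_opp, !Dx_plus, !Dx_scal; [reflexivity|exd..]. }
  assert (Ept : forall x t, pDt p x t = - (kappa * pDt (pDx n) x t + 2*beta*pDt n x t + pDt m x t)).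
  { intros; unfold p; rewrite Dt_opp, !Dt_plus, !Dt_scal; [reflexivity|exdt..]. }
  assert (Erx : forall x t, pDx rho x t = kappa * pDx n x t) by (intros; apply Dx_scal).
  assert (Ert : forall x t, pDt rho x t = kappa * pDt n x t) by (intros; apply Dt_scal).
  assert (Erq : forall x t, pDx (fun y s => rho y s * q y s) x t = - kappa * pDx (fun y s => n y s * w y s) x t).
  { intros; rewrite <- Dx_scal. apply Dx_ext; intros; unfold rho; rewrite Eq; ring. }
  intros x t; split; [|split].
  - rewrite Ept, Epx, Eqx, Erx, Entx, Enwxx, Hn, Enw, Hm.
    replace (q x t) with (- w x t) by (rewrite Eq; reflexivity).
    unfold p, rho; cbv beta.
    rewrite Ewxx, Ezx, Ewx, Enx.
    match goal with |- ?L = 0 => transitivity (n x t * pDx v x t * (4*(alpha+beta^2) - kappa^2)) end;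
      [ring | rewrite Hk; ring].
  - rewrite Ert, Erq, Hn; ring.
  - rewrite Eqxx, Ewxx. unfold p, q; cbv beta. rewrite Enx. unfold n, m. ring.
Qed.
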